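(* Let $n\ge 2$ be an integer, $s=n^2$, $r=n(n-1)$, $m_1=\frac{(n-1)(n-2)}{2}$ and $m_2=\frac{n(n+1)}{2}$. Let $A\in\mathbb{R}^{s\times s}$ be the strictly lower triangular matrix of the optimal third-order method SSPERK$(n^2,3)$: for rows $1\le i\le m_2$, $a_{ij}=\frac1r$ for $j<i$; for rows $m_2<i\le n^2$, $a_{ij}=\frac1r$ for $j\le m_1$, $a_{ij}=\frac{1}{n(2n-1)}$ for $m_1<j\le m_2$, $a_{ij}=\frac1r$ for $m_2<j<i$; and $a_{ij}=0$ for $j\ge i$. Let $c=A\mathbf e$ and $\tilde b=\frac1{n^2}\mathbf e$. Then the explicit Runge--Kutta method $(A,\tilde b)$ has order two ($\tilde b^T\mathbf e=1$, $\tilde b^Tc=\frac12$), it is non-defective, i.e. it violates both third-order conditions: $\tilde b^Tc^2\neq\frac13$ and $\tilde b^T\big(\frac{c^2}{2}-Ac\big)\neq 0$, and its SSP coefficient is positive.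
   Context: An explicit $s$-stage Runge--Kutta method with strictly lower triangular coefficient matrix $A$ and weight vector $b$ is denoted $(A,b)$; $\mathbf e=(1,\dots,1)^T$, $c=A\mathbf e$, and powers of vectors such as $c^2$ are taken componentwise. SSP coefficient: with $K=\begin{pmatrix}A&0\\ b^T&0\end{pmatrix}\in\mathbb{R}^{(s+1)\times(s+1)}$, the SSP coefficient of $(A,b)$ is $\mathcal C(A,b)=\sup\{r\ge 0:\ (I+rK)^{-1}\text{ exists},\ K(I+rK)^{-1}\ge 0,\ rK(I+rK)^{-1}\mathbf e\le \mathbf e\}$, inequalities taken componentwise. *)

(* Defs.v *)
From HB Require Import structures.
From mathcomp Require Import all_boot all_order all_algebra.
Set Implicit Arguments. Unset Strict Implicit. Unset Printing Implicit Defensive.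
Import Order.TTheory GRing.Theory Num.Theory.
Local Open Scope ring_scope.

Definition ones (R : ringType) (s : nat) : 'cV[R]_s := const_mx 1.

Definition dotv (R : ringType) (s : nat) (u v : 'cV[R]_s) : R :=
  \sum_(i < s) u i 0 * v i 0.

Definition vsq (R : ringType) (s : nat) (v : 'cV[R]_s) : 'cV[R]_s :=
  map_mx (fun x => x ^+ 2) v.

Definition Kmat (R : ringType) (s : nat) (A : 'M[R]_s) (b : 'cV[R]_s)
  : 'M[R]_(s + 1) := block_mx A 0 b^T 0.

(* r belongs to the set whose supremum defines the SSP coefficient C(A,b) *)
Definition ssp_feasible (R : realFieldType) (s : nat) (A : 'M[R]_s)
  (b : 'cV[R]_s) (r : R) : Prop :=
  let K := Kmat A b in
  let M := 1%:M + r *: K in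
  [/\ 0 <= r, M \in unitmx,
      (forall i j, 0 <= (K *m invmx M) i j) &
      (forall i, ((r *: K) *m invmx M *m ones R (s + 1)) i 0 <= 1)].

(* C(A,b) > 0: since the feasible set lies in [0,oo), its supremum is
   positive iff it contains a positive element. *)
Definition ssp_coef_pos (R : realFieldType) (s : nat) (A : 'M[R]_s)
  (b : 'cV[R]_s) : Prop :=
  exists r : R, 0 < r /\ ssp_feasible A b r.

(* Butcher matrix of SSPERK(n^2,3); indices are 0-based: paper row i is i+1. *)
Definition ssperk_A (R : fieldType) (n : nat) : 'M[R]_(n ^ 2) :=
  let r := (n * (n - 1))%N in
  let m1 := ((n - 1) * (n - 2) %/ 2)%N in
  let m2 := (n * (n + 1) %/ 2)%N in
  \matrix_(i, j)
    if (j < i)%N then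
      if (i < m2)%N then (r%:R)^-1
      else if (j < m1)%N then (r%:R)^-1
      else if (j < m2)%N then ((n * (2 * n - 1))%N%:R)^-1
      else (r%:R)^-1
    else 0.

(* Main.v *)
Require Import Defs.
From HB Require Import structures.
From mathcomp Require Import all_boot all_order all_algebra.
From mathcomp Require Import ring lra zify.
Import Order.TTheory GRing.Theory Num.Theory.
Local Open Scope ring_scope.

Section SSP.
Variable R : realFieldType.

Lemma lt_nonneg N p (G : 'M[R]_N) (X Y : 'M[R]_(N,p)) :
  (forall i j : 'I_N, (i <= j)%N -> G i j = 0) -> (forall i j, 0 <= G i j) ->
  (forall i j, 0 <= Y i j) -> X = Y + G *m X -> forall i j, 0 <= X i j.
Proof.
move=> G0 Gp Yp E.
suff H: forall k (i : 'I_N), (i < k)%N -> forall j, 0 <= X i j.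
  by move=> i j; exact: (H i.+1 i (ltnSn _) j).
elim=> [|k IH] i // Hi j.
have -> : X i j = (Y + G *m X) i j by rewrite -E.
rewrite !mxE; apply: addr_ge0 => //; apply: sumr_ge0 => l _.
case: (ltnP l i) => hl.
  by apply: mulr_ge0 => //; apply: IH; lia.
by rewrite G0 // mul0r.
Qed.

Lemma mxBZ m p (A B : 'M[R]_(m,p)) (c : R) i j :
  (A - c *: B) i j = A i j - c * B i j.
Proof. by rewrite !mxE. Qed.

Lemma zm (V : zmodType) (e a b p : V) : e - p = e - a + (a - b - (p - b)).
Proof. by rewrite opprB [a - b + _]addrA subrK addrA subrK. Qed.

Lemma ssp_cert N (K : 'M[R]_N) (m : R) : (0 < N)%N ->
  0 < m -> m <= 1 -> (forall i j : 'I_N, (i <= j)%N -> K i j = 0) ->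
  (forall i j : 'I_N, (j < i)%N -> m <= K i j) -> (forall i j, K i j <= 1) ->
  exists t : R, 0 < t /\
  [/\ 0 <= t, 1%:M + t *: K \in unitmx,
      (forall i j, 0 <= (K *m invmx (1%:M + t *: K)) i j) &
      (forall i, ((t *: K) *m invmx (1%:M + t *: K) *m (const_mx 1 : 'cV[R]_N)) i 0 <= 1)].
Proof.
move=> N0 m0 m1 K0 Km K1.
have Kp : forall i j, 0 <= K i j.
  move=> i j; case: (ltnP j i) => h; last by rewrite K0.
  exact: le_trans (ltW m0) (Km _ _ h).
have NR : 0 < N%:R :> R by rewrite ltr0n.
pose c := m / N%:R.
have c0 : 0 < c by rewrite divr_gt0.
have cN0 : c *+ N = m by rewrite /c -mulr_natr mulfVK // gt_eqF.
have cN : \sum_(k < N) c = m by rewrite sumr_const card_ord.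
pose al := \matrix_(i < N, j < N) (if (j < i)%N then c else 0).
pose be := K - al *m K.
pose G := al - c *: be.
pose M := 1%:M + c *: K.
have alp : forall i j, 0 <= al i j.
  by move=> i j; rewrite mxE; case: ifP => _ //; exact: ltW.
have alc : forall i j, al i j <= c.
  by move=> i j; rewrite mxE; case: ifP => _ //; exact: ltW.
have alK : forall i j, 0 <= (al *m K) i j.
  by move=> i j; rewrite mxE; apply: sumr_ge0 => k _; apply: mulr_ge0.
have alK2 : forall i j, (al *m K) i j <= m.
  move=> i j; rewrite mxE -cN; apply: ler_sum => k _.
  by rewrite -[c]mulr1; apply: ler_pM.
have be0 : forall i j : 'I_N, (i <= j)%N -> be i j = 0.
  move=> i j h; rewrite !mxE K0 // sub0r big1 ?oppr0 // => k _.
  rewrite mxE; case: ifP => hk; last by rewrite mul0r.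
  by rewrite K0 ?mulr0 //; lia.
have bep : forall i j, 0 <= be i j.
  move=> i j; case: (ltnP j i) => h; last by rewrite be0.
  have := alK2 i j; rewrite !mxE => H; rewrite subr_ge0.
  exact: le_trans H (Km _ _ h).
have be1 : forall i j, be i j <= 1.
  move=> i j; have := alK i j; rewrite !mxE => H.
  by apply: le_trans (K1 i j); rewrite lerBlDr lerDl.
have G0 : forall i j : 'I_N, (i <= j)%N -> G i j = 0.
  move=> i j h; rewrite /G mxBZ be0 // mulr0 subr0 mxE; case: ifP => //; lia.
have Gp : forall i j, 0 <= G i j.
  move=> i j; case: (ltnP j i) => h; last by rewrite G0.
  rewrite mxBZ mxE h subr_ge0 -{2}[c]mulr1; apply: ler_pM => //; exact: ltW.
have Mu : M \in unitmx.
  rewrite unitmxE det_trig.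
    rewrite big1 ?unitr1 // => i _; rewrite !mxE eqxx K0 // mulr0 addr0 //.
  apply/is_trig_mxP => i j h; rewrite !mxE K0; last by lia.
  by rewrite mulr0 addr0; case: eqP => // hij; move: h; rewrite hij ltnn.
pose P := K *m invmx M.
have KM : K *m M = M *m K.
  by rewrite /M mulmxDl mulmxDr mul1mx mulmx1 -scalemxAl -scalemxAr.
have MP : M *m P = K by rewrite /P mulmxA -KM mulmxK.
have IaM : (1%:M - al) *m M = 1%:M - G.
  rewrite /M mulmxDr mulmx1 -scalemxAr mulmxBl mul1mx /G /be.
  by rewrite opprB [c *: _ - al]addrC addrA.
have PE : P = be + G *m P.
  have : (1%:M - G) *m P = be by rewrite -IaM -mulmxA MP mulmxBl mul1mx.
  by rewrite mulmxBl mul1mx => <-; rewrite subrK.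
have Pp := @lt_nonneg N N G P be G0 Gp bep PE.
pose e : 'cV[R]_N := const_mx 1.
pose w := e - c *: (P *m e).
have wE : w = (e - al *m e) + G *m w.
  rewrite /w mulmxBr -scalemxAr mulmxA.
  have -> : G *m P = P - be by rewrite [in RHS]PE addrAC subrr add0r.
  rewrite [(P - be) *m e]mulmxBl scalerBr /G [(al - _) *m e]mulmxBl -scalemxAl; exact: zm.
have ep : forall i j, 0 <= (e - al *m e) i j.
  move=> i j; rewrite !mxE subr_ge0; apply: le_trans m1.
  rewrite -cN; apply: ler_sum => k _.
  by rewrite !mxE mulr1; case: ifP => _ //; exact: ltW.
have wp := @lt_nonneg N 1 G w _ G0 Gp ep wE.
exists c; split => //; split => //; first exact: ltW.
move=> i; move: (wp i 0); rewrite -scalemxAl -/P -/e -scalemxAl.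
by rewrite /w !mxE subr_ge0.
Qed.
End SSP.

Lemma mxB' (R : ringType) m p (A B : 'M[R]_(m,p)) i j : (A - B) i j = A i j - B i j.
Proof. by rewrite !mxE. Qed.
Lemma mxZ' (R : ringType) m p (a : R) (A : 'M[R]_(m,p)) i j : (a *: A) i j = a * A i j.
Proof. by rewrite !mxE. Qed.
Lemma vsqE (R : ringType) m (v : 'cV[R]_m) i j : vsq v i j = v i j ^+ 2.
Proof. by rewrite !mxE. Qed.

Section Comp.
Variable R : realFieldType.
Variable n : nat.
Hypothesis hn : (2 <= n)%N.

Definition m1 := ((n - 1) * (n - 2) %/ 2)%N.
Definition m2 := (n * (n + 1) %/ 2)%N.
Definition rn := (n * (n - 1))%N.
Definition qn := (n * (2 * n - 1))%N.
Definition NN : R := n%:R.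
Definition ri : R := (rn%:R)^-1.
Definition qi : R := (qn%:R)^-1.

Definition af (i j : nat) : R :=
  if (j < i)%N then
      if (i < m2)%N then ri
      else if (j < m1)%N then ri
      else if (j < m2)%N then qi
      else ri
    else 0.

Lemma Aentry (i j : 'I_(n ^ 2)) : ssperk_A R n i j = af i j.
Proof. by rewrite /ssperk_A mxE. Qed.

Lemma hm2 : (m2 * 2 = n * (n + 1))%N.
Proof. by rewrite /m2 divnK // dvdn2 oddM addn1 /= andbN. Qed.

Lemma hm1 : (m1 * 2 = (n - 1) * (n - 2))%N.
Proof.
rewrite /m1 divnK //; case: n hn => [|[|k]] // _.
by rewrite dvdn2 oddM !subSS !subn0 /= andNb.
Qed.

Definition Tf (k : nat) : R := k%:R * (k%:R - 1) / 2.
Definition Qf (k : nat) : R := k%:R * (k%:R - 1) * (2 * k%:R - 1) / 6.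

Lemma sum_poly (a b : nat) (p q w : R) : (a <= b)%N ->
  \sum_(a <= i < b) (p * i%:R ^+ 2 + q * i%:R + w) =
  p * (Qf b - Qf a) + q * (Tf b - Tf a) + w * (b%:R - a%:R).
Proof.
move=> hab.
rewrite (@telescope_sumr_eq _ a b (fun k => p * Qf k + q * Tf k + w * k%:R)) //.
  by rewrite /Tf /Qf; ring.
move=> k _; rewrite /Tf /Qf -addn1 natrD; by field.
Qed.


Lemma hm12 : (m1 + (2 * n - 1) = m2)%N.
Proof. have := hm1; have := hm2; nia. Qed.

Lemma m2le : (m2 <= n ^ 2)%N.
Proof. have := hm2; nia. Qed.

Lemma nlem2 : (n <= m2)%N.
Proof. have := hm2; nia. Qed.

Lemma m1le : (m1 <= m2)%N.
Proof. have := hm12; lia. Qed.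

Lemma N0 : NN != 0.
Proof. by rewrite /NN pnatr_eq0; lia. Qed.

Lemma N1 : NN - 1 != 0.
Proof. by rewrite /NN subr_eq0 -[1]/(1%:R) eqr_nat; lia. Qed.

Lemma N2 : 2 * NN - 1 != 0.
Proof.
rewrite /NN subr_eq0 -natrM -[1]/(1%:R) eqr_nat; lia.
Qed.

Ltac side := repeat (apply/andP; split); try done;
  first [ exact: N0 | exact: N1 | exact: N2 ].

Lemma hrR : rn%:R = NN * (NN - 1) :> R.
Proof. by rewrite /rn natrM natrB //; lia. Qed.

Lemma hqR : qn%:R = NN * (2 * NN - 1) :> R.
Proof. by rewrite /qn natrM natrB ?natrM //; lia. Qed.

Lemma h1R : m1%:R = (NN - 1) * (NN - 2) / 2 :> R.
Proof.
have := congr1 (fun x => x%:R : R) hm1; rewrite /= !natrM !natrB //; try lia.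
move=> H; apply: (@mulIf _ 2); first by rewrite pnatr_eq0.
by rewrite H /NN; field.
Qed.

Lemma h2R : m2%:R = NN * (NN + 1) / 2 :> R.
Proof.
have := congr1 (fun x => x%:R : R) hm2; rewrite /= !natrM natrD.
move=> H; apply: (@mulIf _ 2); first by rewrite pnatr_eq0.
by rewrite -H /NN; field.
Qed.

Lemma hsR : (n ^ 2)%:R = NN ^+ 2 :> R.
Proof. by rewrite natrX. Qed.


Lemma rowsum (g : nat -> R) (i : nat) : (i <= n ^ 2)%N ->
  \sum_(0 <= j < n ^ 2) af i j * g j =
  if (i < m2)%N then ri * \sum_(0 <= j < i) g j
  else ri * \sum_(0 <= j < m1) g j + qi * \sum_(m1 <= j < m2) g j
       + ri * \sum_(m2 <= j < i) g j.
Proof.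
move=> hi; rewrite (big_cat_nat _ (n := i)) //=.
rewrite [X in _ + X]big_nat_cond [X in _ + X]big1 ?addr0; last first.
  by move=> j /andP[/andP[hij _] _]; rewrite /af ltnNge hij mul0r.
case: ifP => h2.
  by rewrite mulr_sumr; apply: eq_big_nat => j /andP[_ hj]; rewrite /af hj h2.
have hm2i : (m2 <= i)%N by rewrite leqNgt h2.
have hm1i : (m1 <= i)%N by apply: leq_trans m1le hm2i.
rewrite (big_cat_nat _ (n := m1)) //= (@big_cat_nat _ _ _ m2 m1 i) //= ?m1le //.
rewrite !mulr_sumr -!addrA; congr (_ + _).
  by apply: eq_big_nat => j /andP[_ hj]; rewrite /af h2 hj (leq_trans hj hm1i).
congr (_ + _).
  apply: eq_big_nat => j /andP[hj1 hj].
  by rewrite /af h2 (leq_trans hj hm2i) ltnNge hj1 /= hj.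
apply: eq_big_nat => j /andP[hj1 hj].
have f1 : (j < m1)%N = false by have := m1le; lia.
have f2 : (j < m2)%N = false by lia.
by rewrite /af h2 hj f1 f2.
Qed.

Lemma rowsumO (g : nat -> R) (i : 'I_(n ^ 2)) :
  \sum_(j < n ^ 2) ssperk_A R n i j * g j =
  if (i < m2)%N then ri * \sum_(0 <= j < i) g j
  else ri * \sum_(0 <= j < m1) g j + qi * \sum_(m1 <= j < m2) g j
       + ri * \sum_(m2 <= j < i) g j.
Proof.
under eq_bigr do rewrite Aentry.
by rewrite -(big_mkord xpredT (fun j => af i j * g j)) rowsum // ltnW.
Qed.

Definition cf (i : nat) : R := if (i < m2)%N then i%:R * ri else (i%:R - NN) * ri.

Lemma sum_cf_lo a b : (a <= b)%N -> (b <= m2)%N ->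
  \sum_(a <= j < b) cf j = ri * (Tf b - Tf a).
Proof.
move=> hab hb.
transitivity (\sum_(a <= j < b) (0 * j%:R ^+ 2 + ri * j%:R + 0)).
  apply: eq_big_nat => j /andP[_ hj]; rewrite /cf (leq_trans hj hb).
  by rewrite mul0r add0r addr0 mulrC.
by rewrite sum_poly // mul0r add0r mul0r addr0.
Qed.

Lemma sum_cf_hi a b : (m2 <= a)%N -> (a <= b)%N ->
  \sum_(a <= j < b) cf j = ri * (Tf b - Tf a) - NN * ri * (b%:R - a%:R).
Proof.
move=> ha hab.
transitivity (\sum_(a <= j < b) (0 * j%:R ^+ 2 + ri * j%:R + (- NN * ri))).
  apply: eq_big_nat => j /andP[hj _]; rewrite /cf ltnNge (leq_trans ha hj) /=.
  by ring.
by rewrite sum_poly //; ring.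
Qed.

Lemma sum_cf2_lo a b : (a <= b)%N -> (b <= m2)%N ->
  \sum_(a <= j < b) cf j ^+ 2 = ri ^+ 2 * (Qf b - Qf a).
Proof.
move=> hab hb.
transitivity (\sum_(a <= j < b) (ri ^+ 2 * j%:R ^+ 2 + 0 * j%:R + 0)).
  apply: eq_big_nat => j /andP[_ hj]; rewrite /cf (leq_trans hj hb).
  by ring.
by rewrite sum_poly //; ring.
Qed.

Lemma sum_cf2_hi a b : (m2 <= a)%N -> (a <= b)%N ->
  \sum_(a <= j < b) cf j ^+ 2 = ri ^+ 2 * ((Qf b - Qf a)
     - 2 * NN * (Tf b - Tf a) + NN ^+ 2 * (b%:R - a%:R)).
Proof.
move=> ha hab.
transitivity (\sum_(a <= j < b) (ri ^+ 2 * j%:R ^+ 2 + (- 2 * NN * ri ^+ 2) * j%:R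
   + NN ^+ 2 * ri ^+ 2)).
  apply: eq_big_nat => j /andP[hj _]; rewrite /cf ltnNge (leq_trans ha hj) /=.
  by ring.
by rewrite sum_poly //; ring.
Qed.


Lemma c_val (i : 'I_(n ^ 2)) : (ssperk_A R n *m ones R (n ^ 2)) i 0 = cf i.
Proof.
have E1 : forall j, ones R (n ^ 2) j 0 = 1 by move=> j; rewrite mxE.
rewrite mxE; under eq_bigr do rewrite E1.
have := rowsumO (fun _ => 1) i; rewrite /= => ->; rewrite /cf; case: ifP => h.
  by rewrite sumr_const_nat subn0 mulrC.
have hm2i : (m2 <= i)%N by rewrite leqNgt h.
rewrite !sumr_const_nat subn0 !natrB ?m1le // /ri /qi hrR hqR h1R h2R.
field; side.
Qed.


Definition acf (i : nat) : R :=
  if (i < m2)%N then ri * (ri * (Tf i - Tf 0))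
  else ri * (ri * (Tf m1 - Tf 0)) + qi * (ri * (Tf m2 - Tf m1))
       + ri * (ri * (Tf i - Tf m2) - NN * ri * (i%:R - m2%:R)).

Lemma ac_val (i : 'I_(n ^ 2)) :
  (ssperk_A R n *m (ssperk_A R n *m ones R (n ^ 2))) i 0 = acf i.
Proof.
rewrite mxE; under eq_bigr do rewrite c_val.
have := rowsumO cf i; rewrite /= => ->; rewrite /acf; case: ifP => h.
  by rewrite sum_cf_lo // ltnW.
have hm2i : (m2 <= i)%N by rewrite leqNgt h.
by rewrite (sum_cf_hi m2 i) // (sum_cf_lo 0 m1) ?m1le // (sum_cf_lo m1 m2) ?m1le.
Qed.

Lemma dot_bt (v : 'cV[R]_(n ^ 2)) :
  dotv (((n ^ 2)%N%:R)^-1 *: ones R (n ^ 2)) v =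
  ((n ^ 2)%N%:R)^-1 * \sum_(i < n ^ 2) v i 0.
Proof. by rewrite /dotv mulr_sumr; apply: eq_bigr => i _; rewrite !mxE mulr1. Qed.

Lemma sum_split (f : nat -> R) :
  \sum_(i < n ^ 2) f i = \sum_(0 <= i < m2) f i + \sum_(m2 <= i < n ^ 2) f i.
Proof. by rewrite -(big_mkord xpredT f) (big_cat_nat _ (n := m2)) // m2le. Qed.

Lemma Nsq0 : NN ^+ 2 != 0.
Proof. by rewrite expf_neq0 // N0. Qed.

Lemma dot1 : dotv (((n ^ 2)%N%:R)^-1 *: ones R (n ^ 2)) (ones R (n ^ 2)) = 1.
Proof.
rewrite dot_bt; under eq_bigr do rewrite mxE.
by rewrite sumr_const card_ord mulVf // hsR Nsq0.
Qed.

Lemma dot2 : dotv (((n ^ 2)%N%:R)^-1 *: ones R (n ^ 2))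
   (ssperk_A R n *m ones R (n ^ 2)) = 2^-1.
Proof.
rewrite dot_bt; under eq_bigr do rewrite c_val.
rewrite (sum_split cf) (sum_cf_lo 0 m2) // (sum_cf_hi m2 (n ^ 2)) ?m2le //.
rewrite /ri hsR hrR h2R /Tf; field; side.
Qed.


Lemma dot3 : dotv (((n ^ 2)%N%:R)^-1 *: ones R (n ^ 2))
   (vsq (ssperk_A R n *m ones R (n ^ 2))) =
   3^-1 - (NN ^+ 2 - NN - 4) / (12 * NN ^+ 2 * (NN - 1)).
Proof.
rewrite dot_bt; under eq_bigr do rewrite mxE c_val.
rewrite (sum_split (fun i => cf i ^+ 2)) (sum_cf2_lo 0 m2) //.
rewrite (sum_cf2_hi m2 (n ^ 2)) ?m2le //.
rewrite /Tf /Qf /ri !hsR !hrR !h2R; field; side.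
Qed.

Lemma dot4 : dotv (((n ^ 2)%N%:R)^-1 *: ones R (n ^ 2))
   (2^-1 *: vsq (ssperk_A R n *m ones R (n ^ 2)) -
    ssperk_A R n *m (ssperk_A R n *m ones R (n ^ 2))) =
   (4 * NN ^+ 2 * (NN - 1))^-1.
Proof.
rewrite dot_bt; under eq_bigr do rewrite mxB' mxZ' vsqE c_val ac_val.
rewrite (sum_split (fun i => 2^-1 * cf i ^+ 2 - acf i)).
pose W := NN ^+ 2 * ri ^+ 2 / 2 - (ri ^+ 2 * (Tf m1 - Tf 0) + qi * ri * (Tf m2 - Tf m1)
   - ri ^+ 2 * Tf m2 + NN * ri ^+ 2 * m2%:R).
have S1 : \sum_(0 <= i < m2) (2^-1 * cf i ^+ 2 - acf i) = ri ^+ 2 / 2 * (Tf m2 - Tf 0).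
  transitivity (\sum_(0 <= i < m2) (0 * i%:R ^+ 2 + ri ^+ 2 / 2 * i%:R + 0)).
    apply: eq_big_nat => i /andP[_ hi]; rewrite /cf /acf hi /Tf; by field.
  by rewrite sum_poly //; ring.
have S2 : \sum_(m2 <= i < n ^ 2) (2^-1 * cf i ^+ 2 - acf i) =
    ri ^+ 2 / 2 * (Tf (n ^ 2) - Tf m2) + W * ((n ^ 2)%:R - m2%:R).
  transitivity (\sum_(m2 <= i < n ^ 2) (0 * i%:R ^+ 2 + ri ^+ 2 / 2 * i%:R + W)).
    apply: eq_big_nat => i /andP[hi _]; rewrite /cf /acf ltnNge hi /= /W /Tf.
    by field.
  by rewrite sum_poly ?m2le //; ring.
rewrite S1 S2 /W /Tf /ri /qi !hsR !hrR !hqR !h1R !h2R; field; side.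
Qed.


Definition btv : 'cV[R]_(n ^ 2) := ((n ^ 2)%N%:R)^-1 *: ones R (n ^ 2).

Lemma Kentry (i j : 'I_(n ^ 2 + 1)) :
  Kmat (ssperk_A R n) btv i j =
  if (j < i)%N then (if (i < n ^ 2)%N then af i j else ((n ^ 2)%N%:R)^-1) else 0.
Proof.
rewrite /Kmat.
case: (splitP i) => i' hi; case: (splitP j) => j' hj.
- have -> : i = lshift 1 i' by apply: val_inj.
  have -> : j = lshift 1 j' by apply: val_inj.
  have E := ltn_ord i'.
  rewrite block_mxEul Aentry /= /af; by case: ifP.
- have -> : i = lshift 1 i' by apply: val_inj.
  have -> : j = rshift (n ^ 2) j' by apply: val_inj.
  rewrite block_mxEur mxE /=; case: ifP => //; have := ltn_ord i'; lia.
- have -> : i = rshift (n ^ 2) i' by apply: val_inj.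
  have -> : j = lshift 1 j' by apply: val_inj.
  have E := ltn_ord j'.
  rewrite block_mxEdl !mxE /= mulr1; case: ifP => // h; move: h E; lia.
- have -> : i = rshift (n ^ 2) i' by apply: val_inj.
  have -> : j = rshift (n ^ 2) j' by apply: val_inj.
  by rewrite block_mxEdr mxE /= !ord1 ltnn.
Qed.


Lemma inv_le (a b : nat) : (0 < a)%N -> (a <= b)%N -> (b%:R)^-1 <= (a%:R)^-1 :> R.
Proof. by move=> ha hab; rewrite lef_pV2 ?posrE ?ltr0n ?ler_nat //; lia. Qed.

Lemma inv_le1 (b : nat) : (0 < b)%N -> (b%:R)^-1 <= 1 :> R.
Proof. by move=> hb; have := inv_le 1 b isT hb; rewrite invr1. Qed.

Lemma ssp_pos : ssp_coef_pos (ssperk_A R n) btv.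
Proof.
have p1 : (0 < n ^ 2 + 1)%N by rewrite addn1.
have p2 : 0 < ((2 * n ^ 2)%N%:R)^-1 :> R by rewrite invr_gt0 ltr0n; lia.
have p3 : ((2 * n ^ 2)%N%:R)^-1 <= 1 :> R by apply: inv_le1; lia.
have p4 : forall i j : 'I_(n ^ 2 + 1), (i <= j)%N -> Kmat (ssperk_A R n) btv i j = 0.
  by move=> i j h; rewrite Kentry ltnNge h.
have p5 : forall i j : 'I_(n ^ 2 + 1), (j < i)%N ->
    ((2 * n ^ 2)%N%:R)^-1 <= Kmat (ssperk_A R n) btv i j.
  move=> i j h; rewrite Kentry h; case: ifP => hi.
    rewrite /af h; case: ifP => _.
      by rewrite /ri; apply: inv_le; rewrite /rn; nia.
    case: ifP => _; first by rewrite /ri; apply: inv_le; rewrite /rn; nia.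
    case: ifP => _; first by rewrite /qi; apply: inv_le; rewrite /qn; nia.
    by rewrite /ri; apply: inv_le; rewrite /rn; nia.
  by apply: inv_le; nia.
have p6 : forall i j, Kmat (ssperk_A R n) btv i j <= 1.
  move=> i j; rewrite Kentry; case: ifP => h; last by [].
  case: ifP => hi; last by apply: inv_le1; nia.
  rewrite /af h; case: ifP => _.
    by rewrite /ri; apply: inv_le1; rewrite /rn; nia.
  case: ifP => _; first by rewrite /ri; apply: inv_le1; rewrite /rn; nia.
  case: ifP => _; first by rewrite /qi; apply: inv_le1; rewrite /qn; nia.
  by rewrite /ri; apply: inv_le1; rewrite /rn; nia.
have [t [t0 H]] := @ssp_cert R _ _ _ p1 p2 p3 p4 p5 p6.
by exists t; split.
Qed.

End Comp.

Theorem mainTheorem2 (R : realFieldType) (n : nat) (hn : (2 <= n)%N) :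
  let A := ssperk_A R n in
  let e := ones R (n ^ 2) in
  let c := A *m e in
  let bt := ((n ^ 2)%N%:R)^-1 *: e in
  [/\ dotv bt e = 1,
      dotv bt c = 2^-1,
      dotv bt (vsq c) != 3^-1,
      dotv bt (2^-1 *: vsq c - A *m c) != 0 &
      ssp_coef_pos A bt].
Proof.
move=> A e c bt; rewrite /bt /c /e /A.
split.
- exact: dot1.
- exact: dot2.
- rewrite (@dot3 R n hn) -subr_eq0 addrAC subrr add0r oppr_eq0 mulf_eq0 invr_eq0.
  rewrite negb_or; apply/andP; split.
    apply/eqP => H0.
    have E : (rn n)%:R = 4%:R :> R.
      apply/eqP; rewrite -subr_eq0 (@hrR R n hn); apply/eqP; rewrite -H0 /NN; ring.
    move/eqP: E; rewrite eqr_nat /rn => /eqP; nia.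
  by rewrite !mulf_neq0 // ?(@N1 R n hn) ?pnatr_eq0 //; lia.
- rewrite (@dot4 R n hn) invr_eq0.
  by rewrite !mulf_neq0 // ?(@N1 R n hn) ?pnatr_eq0 //; lia.
- exact: (@ssp_pos R n hn).
Qed.
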